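(* Let $G$ be a chordal graph, $p:\wp(V_G)\to\mathbb R$ a $G$-polymatroidal function, and $v_1,\dots,v_n$ an elimination ordering for $G$. For each $i$ let $N_i$ be the set of neighbors of $v_i$ among $v_1,\dots,v_{i-1}$. Then \[ p(V_G)=\sum_{S\subseteq \mathsf{MaxCliques}(G)} -(-1)^{|S|}\,p\big({\textstyle\bigcap}S\big) = \sum_{i=1}^n \Big(p(N_i\cup\{v_i\})-p(N_i)\Big). \]
   Context: Graphs are finite directed graphs; the underlying simple graph $\bar G$ has edges $\{v,w\}$, $v\neq w$, with $(v,w)$ or $(w,v)$ in $E_G$, and cliques, neighbors, chordality, separation refer to $\bar G$. $\mathsf{MaxCliques}(G)$ is the set of maximal cliques; $\bigcap S$ is the intersection of the family $S$, with $\bigcap\emptyset=\emptyset$. $G$ is chordal if $\bar G$ has no induced cycle of length $\ge4$. A vertex is eliminable in $G$ if its neighborhood is a clique; an enumeration $v_1,\dots,v_n$ of $V_G$ is an elimination ordering if $v_j$ is eliminable in the induced subgraph on $\{v_1,\dots,v_j\}$ for each $j$. A function $p:\wp(V_G)\to\mathbb R$ is $G$-polymatroidal if $p(\emptyset)=0$; $p(A)\le p(B)$ for $A\subseteq B$; $p(A\cap B)+p(A\cup B)\le p(A)+p(B)$ for all $A,B$; and $p(A\cap B)+p(A\cup B)=p(A)+p(B)$ whenever there is no edge of $\bar G$ between $A\setminus B$ and $B\setminus A$. *)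

(* Defs.v *)
From HB Require Import structures.
From mathcomp Require Import all_boot all_order all_algebra.
Set Implicit Arguments. Unset Strict Implicit. Unset Printing Implicit Defensive.
Import Order.TTheory GRing.Theory Num.Theory.

Section Graphs.
Variable T : finType.
Variable E : rel T.

(* adjacency in the underlying simple graph *)
Definition adj (v w : T) : bool := (v != w) && (E v w || E w v).

Definition is_clique (A : {set T}) : bool :=
  [forall v in A, forall w in A, (v != w) ==> adj v w].

Definition MaxCliques : {set {set T}} :=
  [set A : {set T} | is_clique A &
     [forall B : {set T}, (is_clique B && (A \subset B)) ==> (B == A)]].

Definition induced_cycle (s : seq T) : bool :=
  [&& uniq s, 4 <= size s &
    [forall i : 'I_(size s), forall j : 'I_(size s),
       adj (tnth (in_tuple s) i) (tnth (in_tuple s) j) ==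
       ((i.+1 %% size s == j) || (j.+1 %% size s == i))]].

Definition chordal : Prop := forall s : seq T, ~~ induced_cycle s.

Definition eliminable_in (U : {set T}) (v : T) : bool :=
  is_clique [set w in U | adj v w].

(* v : 'I_n -> T enumerates V_G (v i is v_{i+1} of the paper) *)
Definition elimination_ordering (n : nat) (v : 'I_n -> T) : Prop :=
  bijective v /\
  forall i : 'I_n, eliminable_in [set v j | j : 'I_n & j <= i] (v i).

Definition Nbefore (n : nat) (v : 'I_n -> T) (i : 'I_n) : {set T} :=
  [set v j | j : 'I_n & (j < i) && adj (v i) (v j)].

Local Open Scope ring_scope.
Definition polymatroidal (R : realFieldType) (p : {set T} -> R) : Prop :=
  [/\ p set0 = 0,
      (forall A B : {set T}, A \subset B -> p A <= p B),
      (forall A B : {set T}, p (A :&: B) + p (A :|: B) <= p A + p B) &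
      (forall A B : {set T},
         (forall x y, x \in A :\: B -> y \in B :\: A -> ~~ adj x y) ->
         p (A :&: B) + p (A :|: B) = p A + p B)].

End Graphs.

(* intersection of a family, with the empty family giving the empty set *)
Definition bigcapS (T : finType) (S : {set {set T}}) : {set T} :=
  if S == set0 then set0 else \bigcap_(A in S) A.

(* Main.v *)
Require Import Defs.
From HB Require Import structures.
From mathcomp Require Import all_boot all_order all_algebra.
Import Order.TTheory GRing.Theory Num.Theory.
Local Open Scope ring_scope.

Section S.
Variables (R : realFieldType) (T : finType).

Lemma split_pow (phi : {set {set T}} -> R) (Y : {set T}) (F : {set {set T}}) :
  Y \notin F ->
  \sum_(S in powerset (Y |: F)) phi S =
  \sum_(S in powerset F) (phi S + phi (Y |: S)).
Proof.
move=> YF; rewrite big_split /= (bigID (fun S : {set {set T}} => Y \in S)) /= addrC.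
congr (_ + _).
  apply: eq_bigl => S; rewrite !powersetE; apply/andP/idP => [[sS nY]|sS].
    apply/subsetP => x xS; have := subsetP sS x xS; rewrite !inE.
    by case/orP => // /eqP ex; rewrite -ex xS in nY.
  split; first by rewrite (subset_trans sS) // subsetUr.
  by apply: contra YF => /(subsetP sS).
rewrite (reindex_onto (fun S => Y |: S) (fun S => S :\ Y)) /=; last first.
  by move=> S /andP[_ YS]; rewrite setD1K.
apply: eq_bigl => S; rewrite !powersetE setU11 andbT.
rewrite subUset sub1set setU11 /=.
apply/andP/idP => [[sS /eqP <-]|sS].
  apply/subsetP => x /setD1P[xY /setU1P[/eqP|xS]]; first by rewrite (negbTE xY).
  by have := subsetP sS x xS; rewrite !inE (negbTE xY).
split; first by rewrite (subset_trans sS) // subsetUr.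
apply/eqP; rewrite setU1K //; by apply: contra YF => /(subsetP sS).
Qed.
End S.

Section Main.
Variables (R : realFieldType) (T : finType) (E : rel T) (p : {set T} -> R).
Hypothesis pm : polymatroidal E p.

Definition term (S : {set {set T}}) : R := - ((-1) ^+ #|S| * p (bigcapS S)).
Definition h (F : {set {set T}}) := \sum_(S in powerset F) term S.
Definition G (F : {set {set T}}) (X : {set T}) :=
  \sum_(S in powerset F) (-1) ^+ #|S| * p (X :&: \bigcap_(A in S) A).

Lemma bigcapU1 (X : {set T}) (S : {set {set T}}) :
  \bigcap_(A in X |: S) A = X :&: \bigcap_(A in S) A.
Proof.
apply/setP => x; rewrite inE; apply/bigcapP/andP => [H|[xX /bigcapP H] A].
  split; first by apply: H; rewrite setU11.
  by apply/bigcapP => A AS; apply: H; rewrite setU1r.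
by case/setU1P => [->|]//; apply: H.
Qed.

Lemma bigcapS_U1 (X : {set T}) (S : {set {set T}}) :
  bigcapS (X |: S) = X :&: \bigcap_(A in S) A.
Proof.
rewrite /bigcapS; case: eqP => [e|_]; last exact: bigcapU1.
by have := setU11 X S; rewrite e inE.
Qed.

Lemma h_U1 (F : {set {set T}}) (X : {set T}) : X \notin F -> h (X |: F) = h F + G F X.
Proof.
move=> XF; rewrite /h split_pow // big_split; congr (_ + _).
apply: eq_bigr => S; rewrite powersetE => sS.
have XS : X \notin S by apply: contra XF => /(subsetP sS).
rewrite /term bigcapS_U1 cardsU1 XS /= exprS mulN1r mulNr opprK.
by [].
Qed.

Lemma G0 (F : {set {set T}}) (X K : {set T}) : K \in F -> X \subset K -> G F X = 0.
Proof.
move=> KF XK; rewrite /G -(setD1K KF) split_pow ?setD11 //.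
apply: big1 => S; rewrite powersetE => sS.
have KS : K \notin S by apply/negP => /(subsetP sS); rewrite setD11.
rewrite bigcapU1 setIA (setIidPl XK) cardsU1 KS /= exprS mulN1r mulNr.
by rewrite addrN.
Qed.

Lemma adjC x y : adj E x y = adj E y x.
Proof. by rewrite /adj eq_sym orbC. Qed.

Lemma adjxx x : adj E x x = false.
Proof. by rewrite /adj eqxx. Qed.

Lemma cliqueP (B : {set T}) :
  reflect (forall x y, x \in B -> y \in B -> x != y -> adj E x y) (is_clique E B).
Proof.
apply: (iffP forallP) => [H x y xB yB xy|H x].
  by have /implyP/(_ xB)/forallP/(_ y)/implyP/(_ yB)/implyP/(_ xy) := H x.
apply/implyP => xB; apply/forallP => y; apply/implyP => yB; apply/implyP.
exact: H.
Qed.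

Definition cl (U : {set T}) : pred {set T} :=
  fun B => (B \subset U) && is_clique E B.
Definition MC (U : {set T}) := [set A | maxset (cl U) A].

Lemma MC_sub (U A : {set T}) : A \in MC U -> A \subset U.
Proof. by rewrite inE => /maxsetp /andP[]. Qed.

Lemma MC_T : MC setT = MaxCliques E.
Proof.
apply/setP => A; rewrite !inE; apply/maxsetP/andP => [[/andP[_ cA] H]|[cA /forallP H]].
  split=> //; apply/forallP => B; apply/implyP => /andP[cB AB].
  by apply/eqP; apply: H => //; rewrite /cl subsetT.
split; first by rewrite /cl subsetT.
move=> B /andP[_ cB] AB; apply/eqP.
by have /implyP := H B; apply; rewrite cB.
Qed.

Lemma MC0 : MC set0 = [set set0].
Proof.
apply/setP => A; rewrite !inE; apply/maxsetP/eqP => [[/andP[A0 _] _]|->].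
  by apply/eqP; rewrite -subset0.
split; first by rewrite /cl sub0set; apply/cliqueP => x y; rewrite inE.
by move=> B /andP[]; rewrite subset0 => /eqP.
Qed.

Lemma h0 : h (MC set0) = 0.
Proof.
case: pm => p0 _ _ _.
rewrite MC0 /h; apply: big1 => S; rewrite powerset1 => /set2P[->|->].
  by rewrite /term /bigcapS eqxx p0 mulr0 oppr0.
rewrite /term /bigcapS; case: ifP => _; first by rewrite p0 mulr0 oppr0.
by rewrite big_set1 p0 mulr0 oppr0.
Qed.

Section Step.
Variables (U : {set T}) (v : T).
Hypothesis vU : v \notin U.
Let N := [set w in U | adj E v w].
Hypothesis cN : is_clique E N.
Let C := v |: N.

Lemma NU : N \subset U.
Proof. by apply/subsetP => x; rewrite inE => /andP[]. Qed.

Lemma vN : v \notin N.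
Proof. by rewrite inE adjxx andbF. Qed.

Lemma cC : is_clique E C.
Proof.
apply/cliqueP => x y /setU1P[->|xN] /setU1P[->|yN] xy.
- by rewrite eqxx in xy.
- by move: yN; rewrite inE => /andP[].
- by rewrite adjC; move: xN; rewrite inE => /andP[].
- by move/cliqueP: cN; apply.
Qed.

Lemma subC {B : {set T}} : v \in B -> cl (v |: U) B -> B \subset C.
Proof.
move=> vB /andP[BU /cliqueP cB]; apply/subsetP => w wB.
case: (eqVneq w v) => [->|wv]; first exact: setU11.
apply/setU1r; rewrite inE; have := subsetP BU w wB.
by case/setU1P => [ev|->]; [rewrite ev eqxx in wv | rewrite adjC; apply: cB].

Qed.

Lemma clC : cl (v |: U) C.
Proof. by rewrite /cl cC andbT setUS // NU. Qed.

Lemma MC_step : MC (v |: U) = C |: (MC U :\ N).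
Proof.
apply/setP => A; rewrite !inE; apply/idP/idP.
  move=> mA; have /andP[AU cA] := maxsetp mA.
  case vA: (v \in A).
    by rewrite (maxsetsup mA clC (subC vA (maxsetp mA))) eqxx.
  have AU' : A \subset U.
    apply/subsetP => x xA; have := subsetP AU x xA.
    by case/setU1P => // ex; rewrite -ex xA in vA.
  have mA' : maxset (cl U) A.
    apply/maxsetP; split; first by rewrite /cl AU' cA.
    move=> B /andP[BU cB] AB; apply: (maxsetsup mA) => //.
    by rewrite /cl cB (subset_trans BU) // subsetUr.
  rewrite mA' andbT orbC; apply/orP; left; apply/eqP => AN.
  have := maxsetsup mA clC; rewrite AN subsetUr => /(_ isT) /eqP.
  rewrite eqEsubset => /andP[CN _]; have := subsetP CN v (setU11 _ _).
  by rewrite (negbTE vN).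
case/orP => [/eqP ->|/andP[AN mA]].
  apply/maxsetP; split; first exact: clC.
  move=> B clB CB; apply/eqP; rewrite eqEsubset CB andbT.
  by apply: subC => //; apply: (subsetP CB); rewrite setU11.
have /andP[AU cA] := maxsetp mA.
apply/maxsetP; split; first by rewrite /cl cA (subset_trans AU) // subsetUr.
move=> B clB AB; case vB: (v \in B).
  have AC := subset_trans AB (subC vB clB).
  have AN' : A \subset N.
    apply/subsetP => x xA; have := subsetP AC x xA; case/setU1P => // ex.
    by have := subsetP AU x xA; rewrite ex (negbTE vU).
  have clN : cl U N by rewrite /cl NU cN.
  have eNA := maxsetsup mA clN AN'.
  by rewrite eNA eqxx in AN.
apply: (maxsetsup mA) => //; case/andP: clB => BU cB; rewrite /cl cB andbT.
apply/subsetP => x xB; have := subsetP BU x xB.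
by case/setU1P => // ex; rewrite -ex xB in vB.
Qed.

Lemma p_step : p (v |: U) = p U + p C - p N.
Proof.
case: pm => _ _ _ pmod.
have I : U :&: C = N.
  apply/setP => x; rewrite !inE; case: (eqVneq x v) => [->|_] /=.
    by rewrite (negbTE vU).
  by case: (x \in U).
have Un : U :|: C = v |: U.
  by rewrite /C setUCA (setUidPl NU).
have H : p (U :&: C) + p (U :|: C) = p U + p C.
  apply: pmod => x y; rewrite !inE => /andP[xN xU] /andP[yU].
  case/orP => [/eqP ->|]; last by case/andP => yU'; rewrite yU' in yU.
  by rewrite adjC; apply: contra xN => ->; rewrite xU orbT.
by rewrite I Un in H; rewrite -H [p N + _]addrC addrK.
Qed.


Lemma h_step : h (MC (v |: U)) = h (MC U) + p C - p N.
Proof.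
set F := MC U; set F0 := F :\ N.
have vC : v \in C := setU11 _ _.
have CF0 : C \notin F0.
  by apply/negP => /setD1P[_ /MC_sub /subsetP /(_ v vC)]; rewrite (negbTE vU).
have NC : N != C.
  by apply/eqP => e; have := vN; rewrite e vC.
have NC' : N \subset C by apply: subsetUr.
have e1 : h (N |: MC (v |: U)) = h (MC (v |: U)).
  rewrite h_U1; last by rewrite MC_step in_setU1 negb_or NC in_setD1 eqxx.
  by rewrite (@G0 _ _ C) ?addr0 // MC_step setU11.
have e2 : N |: (C |: F0) = C |: (N |: F0) by rewrite setUCA.
have CN0 : C \notin N |: F0 by rewrite in_setU1 negb_or eq_sym NC.
have e3 : N |: F0 = N |: F.
  apply/setP => X; rewrite !in_setU1 in_setD1.
  by case: (X == N).
have e4 : h (N |: F) = h F.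
  case NF: (N \in F); first by rewrite (setUidPr _) // sub1set NF.
  have clN : cl U N by rewrite /cl NU cN.
  case: (maxset_exists clN) => K0 mK0 NK0.
  by rewrite h_U1 ?NF // (@G0 _ _ K0) ?addr0 // inE.
have e5 : G (N |: F0) C = p C - p N.
  rewrite /G split_pow; last by rewrite in_setD1 eqxx.
  rewrite (bigD1 set0) ?powersetE ?sub0set //= [X in _ + X = _]big1.
    rewrite cardsU1 in_set0 cards0 bigcapU1 !big_set0 !setIT (setIidPr NC').
    by rewrite expr0 expr1 mul1r mulN1r addr0.
  move=> S /andP[]; rewrite powersetE => sS S0.
  have NS : N \notin S by apply/negP => /(subsetP sS); rewrite in_setD1 eqxx.
  have key : C :&: \bigcap_(A in S) A = N :&: \bigcap_(A in S) A.
    apply/setP => x; rewrite !in_setI; case xS: (x \in \bigcap_(A in S) A); rewrite ?andbF //.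
    rewrite !andbT in_setU1; case: eqP => // ex; rewrite ex in xS.
    case/set0Pn: S0 => K KS; have := subsetP sS K KS; rewrite in_setD1 => /andP[_ /MC_sub KU].
    by have := subsetP KU v (bigcapP xS K KS); rewrite (negbTE vU).
  rewrite bigcapU1 setIA (setIidPr NC') key cardsU1 NS /= exprS mulN1r mulNr.
  by rewrite addrN.
by rewrite -e1 MC_step e2 h_U1 // e5 e3 e4 addrA.
Qed.

End Step.
End Main.

Theorem lemma2p4 (R : realFieldType) (T : finType) (E : rel T)
  (p : {set T} -> R) (n : nat) (v : 'I_n -> T) :
  chordal E -> polymatroidal E p -> elimination_ordering E v ->
  p [set: T] = \sum_(S in powerset (MaxCliques E)) - ((-1) ^+ #|S| * p (bigcapS S))
  /\ \sum_(S in powerset (MaxCliques E)) - ((-1) ^+ #|S| * p (bigcapS S))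
     = \sum_(i < n) (p (v i |: Nbefore E v i) - p (Nbefore E v i)).
Proof.
move=> _ pm [bij elim].
have inj := bij_inj bij.
pose U (k : nat) := [set v j | j : 'I_n & (j < k)%N].
have US : forall i : 'I_n, U i.+1 = v i |: U i.
  move=> i; apply/setP => x; rewrite in_setU1; apply/imsetP/idP.
    case=> j; rewrite inE ltnS => jl ->.
    case: (eqVneq j i) => [->|ji]; first by rewrite eqxx.
    apply/orP; right; apply/imsetP; exists j => //; rewrite inE ltn_neqAle jl andbT.
    by apply: contra ji => /eqP e; apply/eqP/val_inj.
  case/orP => [/eqP ->|/imsetP[j]]; first by exists i; rewrite // inE.
  by rewrite inE => jl ->; exists j; rewrite // inE ltnW.
have vU : forall i : 'I_n, v i \notin U i.
  by move=> i; apply/imsetP => [[j jl /inj eji]]; rewrite eji inE ltnn in jl.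
have NbE : forall i, Nbefore E v i = [set w in U i | adj E (v i) w].
  move=> i; apply/setP => x; rewrite inE; apply/imsetP/andP.
    case=> j; rewrite inE => /andP[jl ad] ->; split => //.
    by apply/imsetP; exists j; rewrite // inE.
  by case=> /imsetP[j]; rewrite inE => jl -> ad; exists j; rewrite // inE jl ad.
have cN : forall i : 'I_n, is_clique E [set w in U i | adj E (v i) w].
  move=> i; have := elim i; rewrite /eliminable_in.
  have -> : [set v j | j : 'I_n & (j <= i)%N] = U i.+1.
    apply/setP => y; apply/imsetP/imsetP => [][j]; rewrite !inE ?ltnS => jl ->;
      by exists j; rewrite // inE ?ltnS.
  suff -> : [set w in U i.+1 | adj E (v i) w] = [set w in U i | adj E (v i) w] by [].
  apply/setP => x; rewrite !inE US in_setU1.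
  by case: eqP => [->|] //=; rewrite adjxx andbF.
have fact : forall a b c : R, a + b - c - a = b - c.
  by move=> a b c; rewrite addrAC [a + b]addrC addrK.
have U0 : U 0 = set0.
  by apply/setP => x; rewrite inE; apply/imsetP => [[j]]; rewrite inE ltn0.
have Un : U n = setT.
  apply/setP => x; rewrite inE; case: bij => g vg gv.
  by apply/imsetP; exists (g x); rewrite ?gv // inE ltn_ord.
have HP : \sum_(i < n) (p (v i |: Nbefore E v i) - p (Nbefore E v i)) = p (U n) - p (U 0).
  rewrite -(telescope_sumr (fun k => p (U k)) (leq0n n)) big_mkord.
  apply: eq_bigr => i _; rewrite US NbE (@p_step _ _ _ _ pm _ _ (vU i)).
  by rewrite fact.
have HH : \sum_(i < n) (p (v i |: Nbefore E v i) - p (Nbefore E v i)) = h _ _ p (MC _ E (U n)) - h _ _ p (MC _ E (U 0)).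
  rewrite -(telescope_sumr (fun k => h _ _ p (MC _ E (U k))) (leq0n n)) big_mkord.
  apply: eq_bigr => i _; rewrite US NbE (@h_step _ _ _ _ _ _ (vU i) (cN i)).
  by rewrite fact.
case: (pm) => p0 _ _ _.
rewrite U0 h0 // subr0 Un MC_T in HH.
rewrite U0 p0 subr0 Un in HP.
split; last exact: (esym HH).
by rewrite -HP HH.
Qed.
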